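(* Let $(W,S)$ be a finite Coxeter system, let $\varphi:W\hookrightarrow\mathrm{Sym}(n)$ ($n\ge2$) be an E-embedding, and let $\alpha\in[\pi/4,\pi/2)$. Then for every $w\in W$ and every reduced expression $w=s_{i_1}s_{i_2}\cdots s_{i_\ell}$ ($s_{i_j}\in S$), $$\mathrm{B}^\alpha_\varphi(\mathrm{id})\prec\mathrm{B}^\alpha_\varphi(s_{i_1})\prec\mathrm{B}^\alpha_\varphi(s_{i_1}s_{i_2})\prec\cdots\prec\mathrm{B}^\alpha_\varphi(s_{i_1}\cdots s_{i_\ell}).$$
   Context: $(W,S)$ is a finite Coxeter system with length function $\ell$ and reflections $T=\{wsw^{-1}: w\in W,s\in S\}$. The right weak order $<_R$ is the transitive closure of $u<_R us$ for $s\in S$ with $\ell(us)=\ell(u)+1$. The Bruhat order $<_B$ is the transitive closure of $u<_B ut$ for $t\in T$ with $\ell(ut)=\ell(u)+1$. $\mathrm{Sym}(n)$, the permutations of $\{1,\dots,n\}$ written on the right ($(i)w$ is the image of $i$; $uv$ = first $u$ then $v$), is regarded as a Coxeter group with generators $(i,i+1)$ and reflections all transpositions. An E-embedding is an injective group homomorphism $\varphi:W\to\mathrm{Sym}(n)$ such that for all $u,v\in W$, $u<_R v$ implies $\varphi(u)<_B\varphi(v)$. Borders: for $\alpha\in(0,\pi/2)$ and $k=1,\dots,n$ let $\theta_k=\frac{(k-1)(\pi-2\alpha)}{n-1}+\alpha$ and $\beta^k_n=(-\cos\theta_k,\sin\theta_k)$. For $\sigma\in\mathrm{Sym}(n)$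 let $p_i(\sigma)=\sum_{j=1}^{i}\beta_n^{(j)\sigma^{-1}}$ ($i=0,\dots,n$) and let the border $\mathrm{B}^\alpha_n(\sigma)=\bigcup_{i=1}^n[p_{i-1}(\sigma),p_i(\sigma)]$ (a polygonal path). Its $y$-coordinate increases strictly from $0$ to $h^\alpha_n=\sum_k\sin\theta_k$; for $y\in[0,h^\alpha_n]$ let $\mathrm{H}(\mathrm{B}^\alpha_n(\sigma),y)$ be the $x$-coordinate of its unique point at height $y$. Write $\mathrm{B}^\alpha_n(\sigma)\prec\mathrm{B}^\alpha_n(\tau)$ if $\mathrm{H}(\mathrm{B}^\alpha_n(\sigma),y)\le\mathrm{H}(\mathrm{B}^\alpha_n(\tau),y)$ for all $y\in[0,h^\alpha_n]$. For an E-embedding $\varphi$ and $w\in W$ put $\mathrm{B}^\alpha_\varphi(w)=\mathrm{B}^\alpha_n(\varphi(w))$. *)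

(* Defs.v *)
From Stdlib Require Import Reals Relations.
From mathcomp Require Import all_boot all_fingroup.
Set Implicit Arguments. Unset Strict Implicit. Unset Printing Implicit Defensive.
Local Open Scope group_scope.

Section Coxeter.
Variable gT : finGroupType.

Definition wprod (s : seq gT) : gT := \prod_(x <- s) x.

Definition word_over (S : {set gT}) (s : seq gT) : bool := all (fun x => x \in S) s.

Definition cox_len (S : {set gT}) (w : gT) (k : nat) : Prop :=
  (exists s, [/\ word_over S s, wprod s = w & size s = k]) /\
  (forall s, word_over S s -> wprod s = w -> (k <= size s)%N).

Definition reduced_expr (S : {set gT}) (s : seq gT) (w : gT) : Prop :=
  [/\ word_over S s, wprod s = w & cox_len S w (size s)].

Definition reflections (W : {set gT}) (S : {set gT}) : {set gT} :=
  [set s ^ w | s in S, w in W].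

(* (W,S) is a (finite) Coxeter system: S consists of involutions generating W
   and W has the Coxeter presentation with m(s,t) = order of st, expressed by
   its universal property (tested against all finite groups). *)
Definition coxeter_system (W : {group gT}) (S : {set gT}) : Prop :=
  [/\ S \subset W, <<S>> = W, (forall s, s \in S -> #[s] = 2) &
      forall (hT : finGroupType) (f : gT -> hT),
        (forall s t, s \in S -> t \in S -> (f s * f t) ^+ #[s * t] = 1) ->
        exists g : {morphism W >-> hT}, forall s, s \in S -> g s = f s].

Definition weak_step (S : {set gT}) (u v : gT) : Prop :=
  exists2 s, s \in S & v = u * s /\ exists k, cox_len S u k /\ cox_len S v k.+1.

Definition weak_lt (S : {set gT}) : relation gT := clos_trans gT (weak_step S).

Definition bruhat_step (W S : {set gT}) (u v : gT) : Prop :=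
  exists2 t, t \in reflections W S &
    v = u * t /\ exists k, cox_len S u k /\ cox_len S v k.+1.

Definition bruhat_lt (W S : {set gT}) : relation gT :=
  clos_trans gT (bruhat_step W S).

End Coxeter.

(* Sym(n) realised as {perm 'I_n} (points 0..n-1 instead of 1..n); mathcomp
   composes permutations left to right ((s * t) x = t (s x)), as in the paper. *)
Definition sym_gens (n : nat) : {set {perm 'I_n}} :=
  [set t | [exists i : 'I_n, exists j : 'I_n, (nat_of_ord j == (nat_of_ord i).+1) && (t == tperm i j)]].

Definition sym_bruhat_lt (n : nat) : relation {perm 'I_n} :=
  bruhat_lt [set: {perm 'I_n}] (sym_gens n).

Definition E_embedding (gT : finGroupType) (W : {group gT}) (S : {set gT})
    (n : nat) (phi : {morphism W >-> {perm 'I_n}}) : Prop :=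
  'injm phi /\
  forall u v, u \in W -> v \in W -> weak_lt S u v -> sym_bruhat_lt (phi u) (phi v).

(* ---------- Borders (0-indexed: k = 0..n-1 stands for k+1) ---------- *)
Unset Implicit Arguments.
Local Open Scope R_scope.

Definition theta (n : nat) (alpha : R) (k : nat) : R :=
  INR k * (PI - 2 * alpha) / INR (n - 1) + alpha.

Definition beta (n : nat) (alpha : R) (k : nat) : R * R :=
  (- cos (theta n alpha k), sin (theta n alpha k)).

Definition bpt (n : nat) (alpha : R) (sigma : {perm 'I_n}) (i : nat) : R * R :=
  (\big[Rplus/0]_(j < n | (j < i)%N) fst (beta n alpha ((sigma^-1)%g j)),
   \big[Rplus/0]_(j < n | (j < i)%N) snd (beta n alpha ((sigma^-1)%g j))).

Definition on_border (n : nat) (alpha : R) (sigma : {perm 'I_n}) (x y : R) : Prop :=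
  exists (i : ordinal n) (l : R), 0 <= l <= 1 /\
    x = (1 - l) * fst (bpt n alpha sigma (nat_of_ord i)) + l * fst (bpt n alpha sigma (nat_of_ord i).+1) /\
    y = (1 - l) * snd (bpt n alpha sigma (nat_of_ord i)) + l * snd (bpt n alpha sigma (nat_of_ord i).+1).

Definition border_height (n : nat) (alpha : R) : R :=
  \big[Rplus/0]_(k < n) sin (theta n alpha k).

(* B(sigma) ≺ B(tau): at every height y in [0,h], H(B(sigma),y) <= H(B(tau),y),
   where H(B,y) is the x-coordinate of the (unique) point of B at height y. *)
Definition border_prec (n : nat) (alpha : R) (sigma tau : {perm 'I_n}) : Prop :=
  forall y, 0 <= y <= border_height n alpha ->
  forall x1 x2, on_border n alpha sigma x1 y -> on_border n alpha tau x2 y -> x1 <= x2.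

(* Main.v *)
Require Import Defs.
From HB Require Import structures.
From Stdlib Require Import Reals Relations Lra.
From mathcomp Require Import all_boot all_fingroup zify.

Module TrigPart.
Local Open Scope R_scope.

Lemma abs_cos_le_sin m : PI / 4 <= m <= 3 * PI / 4 -> Rabs (cos m) <= sin m.
Proof.
move=> [h1 h2]. have hPI := PI_RGT_0.
have hs : 0 <= sin m by apply: sin_ge_0; lra.
have hc : cos (2 * m) <= 0 by apply: cos_le_0; lra.
rewrite cos_2a in hc.
rewrite /Rabs; destruct (Rcase_abs (cos m)); nra.
Qed.

Lemma trig_c1 A B : 0 <= A -> A <= B -> B <= PI ->
  (- cos A) * sin B <= (- cos B) * sin A.
Proof.
move=> h1 h2 h3; have := sin_ge_0 (B - A) ltac:(lra) ltac:(lra).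
rewrite sin_minus; lra.
Qed.

Lemma trig_c23 A B : PI / 4 <= A -> A <= B -> B <= 3 * PI / 4 ->
  sin B + cos B <= sin A + cos A /\ sin A - cos A <= sin B - cos B.
Proof.
move=> h1 h2 h3; have hPI := PI_RGT_0.
have e1 : sin B - sin A = 2 * cos ((B + A) / 2) * sin ((B - A) / 2).
  have := form3 B (- A); rewrite sin_neg.
  have -> : (B - - A) / 2 = (B + A) / 2 by field.
  have -> : (B + - A) / 2 = (B - A) / 2 by field.
  lra.
have e2 := form2 B A.
have hd : 0 <= sin ((B - A) / 2) by apply: sin_ge_0; lra.
have hm := abs_cos_le_sin ((B + A) / 2) ltac:(lra).
have [hm1 hm2] : - sin ((B + A) / 2) <= cos ((B + A) / 2) <= sin ((B + A) / 2).
  by move: hm; rewrite /Rabs; destruct (Rcase_abs (cos ((B + A) / 2))); lra.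
split; nra.
Qed.

End TrigPart.
Import TrigPart.

Set Implicit Arguments. Unset Strict Implicit. Unset Printing Implicit Defensive.

Local Open Scope R_scope.

Lemma Rplus_assoc' : associative Rplus. Proof. by move=> *; rewrite Rplus_assoc. Qed.
HB.instance Definition _ := Monoid.isComLaw.Build R R0 Rplus Rplus_assoc' Rplus_comm Rplus_0_l.

Lemma Rsum_le (I : finType) (P : pred I) (F G : I -> R) :
  (forall i, P i -> F i <= G i) ->
  \big[Rplus/0]_(i | P i) F i <= \big[Rplus/0]_(i | P i) G i.
Proof.
move=> H; apply: (big_ind2 (fun x y => x <= y)) => //; first lra.
by move=> *; lra.
Qed.

Lemma Rsum_abs_le (I : finType) (P : pred I) (F G : I -> R) :
  (forall i, P i -> Rabs (F i) <= G i) ->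
  Rabs (\big[Rplus/0]_(i | P i) F i) <= \big[Rplus/0]_(i | P i) G i.
Proof.
move=> H; apply: (big_ind2 (fun x y => Rabs x <= y)) => //.
  by rewrite Rabs_R0; lra.
move=> x1 x2 y1 y2 h1 h2; have := Rabs_triang x1 y1; lra.
Qed.

Lemma Rsum_opp (I : finType) (P : pred I) (F : I -> R) :
  \big[Rplus/0]_(i | P i) (- F i) = - \big[Rplus/0]_(i | P i) F i.
Proof.
apply: (big_ind2 (fun x y => x = - y)) => //; first lra.
by move=> *; lra.
Qed.

Lemma Rsum_sub (I : finType) (P : pred I) (F G : I -> R) :
  \big[Rplus/0]_(i | P i) F i - \big[Rplus/0]_(i | P i) G i =
  \big[Rplus/0]_(i | P i) (F i - G i).
Proof.
rewrite /Rminus big_split /= Rsum_opp //.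
Qed.

Definition cl (z : R) : R := Rmin 1 (Rmax 0 z).

Lemma cl0 z : z <= 0 -> cl z = 0.
Proof. rewrite /cl /Rmin /Rmax; repeat destruct Rle_dec; lra. Qed.
Lemma cl1 z : 1 <= z -> cl z = 1.
Proof. rewrite /cl /Rmin /Rmax; repeat destruct Rle_dec; lra. Qed.
Lemma clid z : 0 <= z <= 1 -> cl z = z.
Proof. rewrite /cl /Rmin /Rmax; repeat destruct Rle_dec; lra. Qed.
Lemma cl_mono z1 z2 : z1 <= z2 -> cl z1 <= cl z2.
Proof. rewrite /cl /Rmin /Rmax; repeat destruct Rle_dec; lra. Qed.

Section Sw.
Variable n : nat.

Definition Sw (W : 'I_n -> R) (T : R) : R :=
  \big[Rplus/0]_(j < n) (cl (T - INR j) * W j).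

Definition Pw (W : 'I_n -> R) (k : nat) : R :=
  \big[Rplus/0]_(j < n | (j < k)%N) W j.

Lemma Sw_ext W1 W2 T : (forall j, W1 j = W2 j) -> Sw W1 T = Sw W2 T.
Proof. by move=> h; apply: eq_bigr => j _; rewrite h. Qed.

Lemma Sw_at W (i : 'I_n) T : INR i <= T <= INR i + 1 ->
  Sw W T = Pw W i + (T - INR i) * W i.
Proof.
move=> hT; rewrite /Sw (bigD1 i) //= clid; last lra.
rewrite Rplus_comm; congr (_ + _).
rewrite /Pw big_mkcond [in RHS]big_mkcond; apply: eq_bigr => j _ /=.
case: (eqVneq j i) => [->|hji] /=; first by rewrite ltnn.
case: (ltngtP j i) => [hlt|hgt|/val_inj e]; last by rewrite e eqxx in hji.
  rewrite cl1 ?Rmult_1_l //.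
  have : (INR j + 1 <= INR i)%R by rewrite -S_INR; apply: le_INR; apply/leP.
  lra.
rewrite cl0 ?Rmult_0_l //.
have : (INR i + 1 <= INR j)%R by rewrite -S_INR; apply: le_INR; apply/leP.
lra.
Qed.

Lemma Sw_interp W (i : 'I_n) T1 T2 : INR i <= T1 <= INR i + 1 ->
  INR i <= T2 <= INR i + 1 -> Sw W T2 = Sw W T1 + (T2 - T1) * W i.
Proof. move=> h1 h2; rewrite (Sw_at W h1) (Sw_at W h2); ring. Qed.

Lemma Pw_succ W (i : 'I_n) : Pw W i.+1 = Pw W i + W i.
Proof.
rewrite /Pw (bigD1 i) //= Rplus_comm; congr (_ + _).
apply: eq_bigl => j; case: (eqVneq j i) => [->|h]; first by rewrite ltnn andbF.
rewrite andbT ltnS leq_eqVlt; case: (ltngtP j i) => //= e.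
by rewrite (val_inj e) eqxx in h.
Qed.

Lemma Pw0 W : Pw W 0 = 0.
Proof. by rewrite /Pw big_pred0. Qed.

Lemma Pwn W : Pw W n = \big[Rplus/0]_(j < n) W j.
Proof. by rewrite /Pw; apply: eq_bigl => j; rewrite ltn_ord. Qed.

Lemma Sw_diff W T1 T2 :
  Sw W T2 - Sw W T1 = \big[Rplus/0]_(j < n) ((cl (T2 - INR j) - cl (T1 - INR j)) * W j).
Proof. rewrite /Sw Rsum_sub; apply: eq_bigr => j _; ring. Qed.

Lemma Sw_lip U H T1 T2 : (forall j, Rabs (U j) <= H j) ->
  Rabs (Sw U T1 - Sw U T2) <= Rabs (Sw H T1 - Sw H T2).
Proof.
move=> hUH.
wlog le12 : T1 T2 / T1 <= T2.
  move=> hw; case: (Rle_dec T1 T2) => h; first by apply: hw.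
  rewrite Rabs_minus_sym [X in _ <= X]Rabs_minus_sym; apply: hw; lra.
rewrite Rabs_minus_sym [X in _ <= X]Rabs_minus_sym !Sw_diff.
have hp : forall j : 'I_n, 0 <= cl (T2 - INR j) - cl (T1 - INR j).
  move=> j; have := @cl_mono (T1 - INR j) (T2 - INR j) ltac:(lra); lra.
apply: Rle_trans (Rle_abs _).
apply: Rsum_abs_le => j _; rewrite Rabs_mult Rabs_pos_eq //.
by apply: Rmult_le_compat_l.
Qed.

End Sw.


Section Swap.
Variable n : nat.

Lemma Sw_swap (W : 'I_n -> R) (a b : 'I_n) T : a != b ->
  Sw (fun j => W (tperm a b j)) T =
  Sw W T + (cl (T - INR b) - cl (T - INR a)) * (W a - W b).
Proof.
move=> hab.
have -> : Sw (fun j => W (tperm a b j)) T =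
          \big[Rplus/0]_(j < n) (cl (T - INR (tperm a b j)) * W j).
  rewrite /Sw (reindex_inj (h := tperm a b)) /=; last exact: perm_inj.
  by apply: eq_bigr => j _; rewrite tpermK.
apply: (Rplus_eq_reg_l (- Sw W T)).
rewrite /Sw.
have e : forall x y : R, - y + x = x - y by move=> *; ring.
rewrite e Rsum_sub (bigD1 a) //= (bigD1 b) /=; last by rewrite eq_sym.
rewrite big1; last first.
  move=> j hj; move: hj; rewrite andbC => /andP [hjb hja].
  have hja' : j != a by move: hja; case: (j != a).
  rewrite tpermD; first ring.
    by rewrite eq_sym. by rewrite eq_sym.
rewrite tpermL tpermR; ring.
Qed.

Lemma Sw_swap_main (U H : 'I_n -> R) (a b : 'I_n) :
  (a < b)%N ->
  (forall j, Rabs (U j) <= H j) -> 0 < H a -> 0 < H b ->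
  U a * H b <= U b * H a -> H b - U b <= H a - U a -> U a + H a <= U b + H b ->
  forall T', exists T'',
    Sw U T'' + Rabs (Sw (fun j => H (tperm a b j)) T' - Sw H T'')
      <= Sw (fun j => U (tperm a b j)) T'.
Proof.
move=> hab hUH hHa hHb c1 c2 c3 T'.
have hne : a != b by rewrite neq_ltn hab.
rewrite !Sw_swap //.
have hab' : INR a + 1 <= INR b by rewrite -S_INR; apply: le_INR; apply/leP.
have hUa := hUH a; have hUb := hUH b.
have [ua1 ua2] : - H a <= U a <= H a by move: hUa; rewrite /Rabs; destruct (Rcase_abs (U a)); lra.
have [ub1 ub2] : - H b <= U b <= H b by move: hUb; rewrite /Rabs; destruct (Rcase_abs (U b)); lra.
case: (Rle_dec T' (INR a)) => h1.
  exists T'; rewrite cl0 ?cl0; try lra.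
  rewrite Rminus_0_r Rmult_0_l Rplus_0_r /Rminus Rplus_opp_r Rabs_R0; lra.
case: (Rle_dec (INR b + 1) T') => h2.
  exists T'; rewrite cl1 ?cl1; try lra.
  rewrite Rminus_diag Rmult_0_l Rplus_0_r /Rminus Rplus_opp_r Rabs_R0; lra.
case: (Rle_dec T' (INR a + 1)) => h3.
  set l := T' - INR a.
  rewrite (@cl0 (T' - INR b)); last lra.
  rewrite (@clid l); last (rewrite /l; lra).
  case: (Rle_dec (l * H b) (H a)) => h4.
    exists (INR a + l * H b / H a).
    have hT : INR a <= INR a + l * H b / H a <= INR a + 1.
      split.
        have : 0 <= l * H b / H a by apply: Rmult_le_pos; [apply: Rmult_le_pos; rewrite /l; lra| apply: Rlt_le; apply: Rinv_0_lt_compat].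
        lra.
      have : l * H b / H a <= 1.
        apply: (Rmult_le_reg_r (H a)) => //; rewrite Rmult_1_l /Rdiv Rmult_assoc Rinv_l; lra.
      lra.
    rewrite (Sw_interp U (i := a) (T1 := T') (T2 := (INR a + l * H b / H a))); try lra; try (rewrite /l; lra).
  rewrite (Sw_interp H (i := a) (T1 := T') (T2 := (INR a + l * H b / H a))); try lra; try (rewrite /l; lra).
    have -> : (INR a + l * H b / H a - T') = l * (H b / H a - 1) by rewrite /l; field; lra.
    have -> : Sw H T' + (0 - l) * (H a - H b) - (Sw H T' + l * (H b / H a - 1) * H a) = 0.
      field; lra.
    rewrite Rabs_R0.
    have : U a * (H b / H a) <= U b.
      apply: (Rmult_le_reg_r (H a)) => //.
      have -> : U a * (H b / H a) * H a = U a * H b by field; lra.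
      done.
    move=> h5; have hl : 0 <= l by rewrite /l; lra.
    have := Rmult_le_compat_l l _ _ hl h5. nra.
  exists (INR a + 1).
  rewrite (Sw_interp U (i := a) (T1 := T') (T2 := (INR a + 1))); try lra; try (rewrite /l; lra).
  rewrite (Sw_interp H (i := a) (T1 := T') (T2 := (INR a + 1))); try lra; try (rewrite /l; lra).
  have -> : INR a + 1 - T' = 1 - l by rewrite /l; ring.
  rewrite Rabs_pos_eq; last nra.
  have hl : 0 <= l <= 1 by rewrite /l; lra.
  nra.
case: (Rle_dec T' (INR b)) => h5.
  exists T'; rewrite cl0 ?cl1; try lra.
  have -> : Sw H T' + (0 - 1) * (H a - H b) - Sw H T' = H b - H a by ring.
  have : Rabs (H b - H a) <= U b - U a by apply: Rabs_le; lra.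
  lra.
set l := T' - INR b.
rewrite (@cl1 (T' - INR a)); last lra.
rewrite (@clid l); last (rewrite /l; lra).
have hl : 0 <= l <= 1 by rewrite /l; lra.
case: (Rle_dec ((1 - l) * H a) (H b)) => h4.
  exists (INR b + 1 - (1 - l) * H a / H b).
  have hq : 0 <= (1 - l) * H a / H b <= 1.
    split.
      apply: Rmult_le_pos; [apply: Rmult_le_pos; lra| apply: Rlt_le; apply: Rinv_0_lt_compat; lra].
    apply: (Rmult_le_reg_r (H b)) => //; rewrite Rmult_1_l /Rdiv Rmult_assoc Rinv_l; lra.
  rewrite (Sw_interp U (i := b) (T1 := T') (T2 := (INR b + 1 - (1 - l) * H a / H b))); try lra; try (rewrite /l; lra).
  rewrite (Sw_interp H (i := b) (T1 := T') (T2 := (INR b + 1 - (1 - l) * H a / H b))); try lra; try (rewrite /l; lra).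
  have -> : INR b + 1 - (1 - l) * H a / H b - T' = (1 - l) - (1 - l) * H a / H b by rewrite /l; ring.
  have -> : Sw H T' + (l - 1) * (H a - H b) - (Sw H T' + (1 - l - (1 - l) * H a / H b) * H b) = 0.
    field; lra.
  rewrite Rabs_R0.
  have : U a <= H a * U b / H b.
    apply: (Rmult_le_reg_r (H b)) => //.
    have -> : H a * U b / H b * H b = U b * H a by field; lra.
    done.
  move=> h6.
  have -> : (1 - l - (1 - l) * H a / H b) * U b = (1 - l) * U b - (1 - l) * (H a * U b / H b) by field; lra.
  have := Rmult_le_compat_l (1 - l) _ _ ltac:(lra) h6. nra.
exists (INR b).
rewrite (Sw_interp U (i := b) (T1 := T') (T2 := (INR b))); try lra; try (rewrite /l; lra).
  rewrite (Sw_interp H (i := b) (T1 := T') (T2 := (INR b))); try lra; try (rewrite /l; lra).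
have -> : INR b - T' = - l by rewrite /l; ring.
rewrite Rabs_left; last nra.
nra.
Qed.

End Swap.


Section Geo.
Variables (n : nat) (alpha : R).
Hypotheses (hn : (2 <= n)%N) (ha1 : PI / 4 <= alpha) (ha2 : alpha < PI / 2).

Lemma INR_n1 : 1 <= INR (n - 1).
Proof. rewrite -/(INR 1); apply: le_INR; apply/leP; rewrite leq_subRL //; exact: ltnW. Qed.

Lemma theta_bounds k : (k < n)%N -> alpha <= theta n alpha k <= PI - alpha.
Proof.
move=> hk; have hN := INR_n1; have hPI := PI_RGT_0.
have hkN : INR k <= INR (n - 1) by apply: le_INR; apply/leP; rewrite leq_subRL ?add1n //; exact: ltnW.
have hk0 := pos_INR k.
rewrite /theta; set N := INR (n - 1) in hN hkN *.
have hc : 0 <= PI - 2 * alpha by lra.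
split.
  have : 0 <= INR k * (PI - 2 * alpha) / N.
    apply: Rmult_le_pos; [nra | apply: Rlt_le; apply: Rinv_0_lt_compat; lra].
  lra.
have : INR k * (PI - 2 * alpha) / N <= PI - 2 * alpha.
  apply: (Rmult_le_reg_r N); first lra.
  rewrite /Rdiv Rmult_assoc Rinv_l; last lra. nra.
lra.
Qed.

Lemma theta_mono k1 k2 : (k1 <= k2)%N -> theta n alpha k1 <= theta n alpha k2.
Proof.
move=> hk; have hN := INR_n1; have hPI := PI_RGT_0.
have h12 : INR k1 <= INR k2 by apply: le_INR; apply/leP.
rewrite /theta; set N := INR (n - 1) in hN *.
apply: Rplus_le_compat_r; rewrite /Rdiv; apply: Rmult_le_compat_r.
  apply: Rlt_le; apply: Rinv_0_lt_compat; lra.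
apply: Rmult_le_compat_r; lra.
Qed.

Lemma theta_range k : (k < n)%N -> PI / 4 <= theta n alpha k <= 3 * PI / 4 /\ 0 < sin (theta n alpha k).
Proof.
move=> hk; have := theta_bounds hk; have hPI := PI_RGT_0 => hb.
split; first lra. apply: sin_gt_0; lra.
Qed.

Definition Uf (s : {perm 'I_n}) (j : 'I_n) := - cos (theta n alpha ((s^-1)%g j)).
Definition Hf (s : {perm 'I_n}) (j : 'I_n) := sin (theta n alpha ((s^-1)%g j)).

Lemma UH_abs s j : Rabs (Uf s j) <= Hf s j.
Proof.
rewrite /Uf /Hf Rabs_Ropp; apply: abs_cos_le_sin.
by case: (theta_range (ltn_ord ((s^-1)%g j))).
Qed.

Lemma Hf_pos s j : 0 < Hf s j.
Proof. by case: (theta_range (ltn_ord ((s^-1)%g j))). Qed.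

Lemma Pw_Sw (W : 'I_n -> R) (i : 'I_n) l : 0 <= l <= 1 ->
  (1 - l) * Pw W i + l * Pw W i.+1 = Sw W (INR i + l).
Proof. move=> hl; rewrite Pw_succ (Sw_at W (i := i) (T := INR i + l)); last lra; ring. Qed.

Lemma on_border_T s x y : on_border n alpha s x y ->
  exists T, x = Sw (Uf s) T /\ y = Sw (Hf s) T.
Proof.
case=> i [l [hl [hx hy]]]; exists (INR i + l).
rewrite -(Pw_Sw (Uf s) i hl) -(Pw_Sw (Hf s) i hl); split; [rewrite hx | rewrite hy]; reflexivity.
Qed.

Lemma Pw_exist (W : 'I_n -> R) : (forall j, 0 < W j) -> forall k, (k < n)%N ->
  forall y, 0 <= y <= Pw W k.+1 ->
  exists (i : 'I_n) l, 0 <= l <= 1 /\ y = (1 - l) * Pw W i + l * Pw W i.+1.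
Proof.
move=> hW; elim=> [|k IH] hk y hy.
  pose i := Ordinal hk.
  have e : Pw W 1 = Pw W 0 + W i by exact: (Pw_succ W i).
  rewrite Pw0 in e; have hWi := hW i.
  exists i, (y / W i); rewrite /= Pw0 e; split; last (field; lra).
  split; first by apply: Rmult_le_pos; [lra | apply: Rlt_le; apply: Rinv_0_lt_compat].
  apply: (Rmult_le_reg_r (W i)) => //; rewrite /Rdiv Rmult_assoc Rinv_l; lra.
have hk' : (k < n)%N by apply: ltnW.
case: (Rle_dec y (Pw W k.+1)) => h; first by apply: IH => //; lra.
pose i := Ordinal hk.
have e : Pw W k.+2 = Pw W k.+1 + W i by exact: (Pw_succ W i).
have hWi := hW i.
exists i, ((y - Pw W k.+1) / W i); rewrite /= e; split; last (field; lra).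
split; first by apply: Rmult_le_pos; [lra | apply: Rlt_le; apply: Rinv_0_lt_compat].
apply: (Rmult_le_reg_r (W i)) => //; rewrite /Rdiv Rmult_assoc Rinv_l; lra.
Qed.

Lemma exist_on_border s y : 0 <= y <= border_height n alpha ->
  exists x, on_border n alpha s x y.
Proof.
move=> hy.
have e : border_height n alpha = Pw (Hf s) n.
  rewrite Pwn /border_height /Hf.
  rewrite (reindex_inj (h := (s^-1)%g)) /=; last exact: perm_inj.
  done.
rewrite e in hy.
have hn1 : (n.-1 < n)%N by rewrite prednK ?ltnSn //; apply: leq_trans hn.
have hn2 : n.-1.+1 = n by rewrite prednK //; apply: leq_trans hn.
have [i [l [hl hyl]]] := Pw_exist (@Hf_pos s) hn1 (y := y) ltac:(rewrite hn2; exact hy).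
exists ((1 - l) * Pw (Uf s) i + l * Pw (Uf s) i.+1).
by exists i, l; split.
Qed.

Lemma prec_trans s1 s2 s3 : border_prec n alpha s1 s2 -> border_prec n alpha s2 s3 ->
  border_prec n alpha s1 s3.
Proof.
move=> h12 h23 y hy x1 x3 hx1 hx3.
have [x2 hx2] := exist_on_border s2 hy.
have := h12 y hy x1 x2 hx1 hx2; have := h23 y hy x2 x3 hx2 hx3; lra.
Qed.

Lemma step_prec (s : {perm 'I_n}) (a b : 'I_n) : (a < b)%N ->
  ((s^-1)%g a < (s^-1)%g b)%N ->
  border_prec n alpha s (s * tperm a b)%g.
Proof.
move=> hab hg y hy x1 x2 h1 h2.
have [T [e1 e2]] := on_border_T h1.
have [T' [e3 e4]] := on_border_T h2.
have eU : forall j, Uf (s * tperm a b)%g j = Uf s (tperm a b j).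
  by move=> j; rewrite /Uf invMg tpermV permM.
have eH : forall j, Hf (s * tperm a b)%g j = Hf s (tperm a b j).
  by move=> j; rewrite /Hf invMg tpermV permM.
rewrite (Sw_ext _ eU) in e3; rewrite (Sw_ext _ eH) in e4.
have [rA hA] := theta_range (ltn_ord ((s^-1)%g a)).
have [rB hB] := theta_range (ltn_ord ((s^-1)%g b)).
have hAB := theta_mono (ltnW hg).
have hPI := PI_RGT_0.
have [c2 c3] := trig_c23 (theta n alpha ((s^-1)%g a)) (theta n alpha ((s^-1)%g b)) (proj1 rA) hAB (proj2 rB).
have c1 := trig_c1 (theta n alpha ((s^-1)%g a)) (theta n alpha ((s^-1)%g b)) ltac:(lra) hAB ltac:(lra).
have [T'' hT''] := Sw_swap_main (U := Uf s) (H := Hf s) hab (@UH_abs s) (Hf_pos s a) (Hf_pos s b)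
   ltac:(rewrite /Uf /Hf; lra) ltac:(rewrite /Uf /Hf; lra) ltac:(rewrite /Uf /Hf; lra) T'.
have hl := Sw_lip T T'' (@UH_abs s).
rewrite e1 e3; rewrite -e4 e2 in hT''.
have := Rle_abs (Sw (Uf s) T - Sw (Uf s) T''). lra.
Qed.

End Geo.

Local Close Scope R_scope.

Section Comb.
Variable n : nat.
Local Open Scope group_scope.

Definition Inv (g : {perm 'I_n}) : {set 'I_n * 'I_n} :=
  [set pq : 'I_n * 'I_n | (pq.1 < pq.2)%N && (g pq.2 < g pq.1)%N].

Lemma ord_neq (y i : 'I_n) : y != i -> (val y != val i).
Proof. by []. Qed.

Lemma tval (i j z : 'I_n) :
  nat_of_ord (tperm i j z) = if z == i then nat_of_ord j else if z == j then nat_of_ord i else nat_of_ord z.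
Proof.
case: (eqVneq z i) => [->|hzi]; first by rewrite tpermL.
case: (eqVneq z j) => [->|hzj]; first by rewrite tpermR.
by rewrite tpermD // eq_sym.
Qed.

Lemma adj (i j y z : 'I_n) : nat_of_ord j = (nat_of_ord i).+1 ->
  (tperm i j z < tperm i j y)%N -> (z < y)%N \/ (y = i /\ z = j).
Proof.
move=> hj; rewrite !tval.
have E : forall u v : 'I_n, (u == v) = (nat_of_ord u == nat_of_ord v) by [].
rewrite !E.
case: ifP => /eqP h1; case: ifP => /eqP h2; try case: ifP => /eqP h3; try case: ifP => /eqP h4;
 move=> h; try first [left; lia | right; split; apply: ord_inj; lia].
Qed.

Lemma inv_adj_le (g : {perm 'I_n}) (i j : 'I_n) : nat_of_ord j = (nat_of_ord i).+1 ->
  (#|Inv (g * tperm i j)| <= #|Inv g|.+1)%N.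
Proof.
move=> hj.
apply: (@leq_trans #|(g^-1 i, g^-1 j) |: Inv g|).
  apply: subset_leq_card; apply/subsetP => -[p q]; rewrite !inE /= !permM => /andP [hpq h].
  case: (adj hj h) => [hlt | [e1 e2]]; first by rewrite hpq hlt orbT.
  by rewrite -e1 -e2 !permK eqxx.
by rewrite cardsU1; case: (_ \notin _).
Qed.

Lemma sym_gensP (x : {perm 'I_n}) : x \in sym_gens n ->
  exists i j : 'I_n, nat_of_ord j = (nat_of_ord i).+1 /\ x = tperm i j.
Proof.
by rewrite inE => /existsP [i /existsP [j /andP [/eqP hj /eqP ->]]]; exists i, j.
Qed.

Lemma Inv1 : #|Inv 1| = 0%N.
Proof.
apply/eqP; rewrite cards_eq0; apply/eqP/setP => -[p q]; rewrite !inE /= !perm1.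
by case: ltngtP.
Qed.

Lemma inv_word_le (s : seq {perm 'I_n}) : word_over (sym_gens n) s ->
  (#|Inv (wprod s)^-1| <= size s)%N.
Proof.
elim: s => [|x s IH]; first by rewrite /wprod big_nil invg1 Inv1.
rewrite /word_over /= => /andP [hx hs].
rewrite /wprod big_cons -/(wprod s) invMg.
have [i [j [hj ->]]] := sym_gensP hx.
rewrite tpermV; apply: leq_trans (inv_adj_le _ hj) _.
by rewrite ltnS; apply: IH.
Qed.

Lemma mono_id (f : nat -> nat) : (forall k, (k.+1 < n)%N -> (f k < f k.+1)%N) ->
  (forall k, (k < n)%N -> (f k < n)%N) -> forall k, (k < n)%N -> f k = k.
Proof.
move=> hinc hb.
have up : forall k, (k < n)%N -> (k <= f k)%N.
  elim=> [|k IH] hk //; have := IH (ltnW hk); have := hinc k hk; lia.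
have down : forall d k, (k + d < n)%N -> (f k + d < n)%N.
  elim=> [|d IH] k hk; first by rewrite addn0; apply: hb; lia.
  have := IH k.+1 ltac:(lia); have := hinc k ltac:(lia); lia.
move=> k hk; have := up k hk; have := down (n - k.+1) k ltac:(lia); lia.
Qed.

Lemma inv_word_ex (sg : {perm 'I_n}) : exists s, [/\ word_over (sym_gens n) s,
  wprod s = sg & (size s <= #|Inv sg^-1|)%N].
Proof.
have [k hk] : exists k, (#|Inv sg^-1| < k)%N by exists #|Inv sg^-1|.+1.
elim: k sg hk => // k IH sg hk.
case: (boolP [exists i : 'I_n, exists j : 'I_n,
   (nat_of_ord j == (nat_of_ord i).+1) && (sg j < sg i)%N]).
  case/existsP => i /existsP [j /andP [/eqP hj hlt]].
  set x := tperm i j.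
  have hprop : Inv (sg^-1 * x) \proper Inv sg^-1.
    apply/properP; split.
      apply/subsetP => -[p q]; rewrite !inE /= !permM => /andP [hpq h].
      case: (adj hj h) => [hl | [e1 e2]]; first by rewrite hpq hl.
      have ep : p = sg i by rewrite -e1 permKV.
      have eq : q = sg j by rewrite -e2 permKV.
      move: hpq hlt; rewrite ep eq; lia.
    exists (sg j, sg i); rewrite !inE /= ?permM !permK.
      by rewrite hlt hj ltnSn.
    rewrite /x tpermL tpermR hj; apply/negP => /andP [_]; lia.
  have hc := proper_card hprop.
  have e0 : (x * sg)^-1 = sg^-1 * x by rewrite invMg /x tpermV.
  have [s0 [hs0 hw0 hsz0]] := IH (x * sg) ltac:(rewrite e0; lia).
  exists (x :: s0); split.
  - move: hs0; rewrite /word_over /= => ->; rewrite andbT inE; apply/existsP; exists i; apply/existsP; exists j.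
    by rewrite hj /x !eqxx.
  - by rewrite /wprod big_cons -/(wprod s0) hw0 mulgA /x -{1}(tpermV i j) mulVg mul1g.
  - rewrite /=; rewrite e0 in hsz0; exact: leq_ltn_trans hsz0 hc.
move=> hno; exists [::]; split => //.
rewrite /wprod big_nil; apply/permP => k0; rewrite perm1; apply: ord_inj.
pose f := fun m => nat_of_ord (sg (insubd k0 m)).
have hf : forall m, (m < n)%N -> f m = m.
  apply: mono_id.
    move=> m hm; rewrite /f.
    have hm' : (m < n)%N by lia.
    set a := insubd k0 m; set b := insubd k0 m.+1.
    have ea : nat_of_ord a = m by rewrite /a val_insubd hm'.
    have eb : nat_of_ord b = m.+1 by rewrite /a val_insubd hm.
    move/existsPn: hno => /(_ a) /existsPn /(_ b).
    rewrite eb ea eqxx /= -leqNgt leq_eqVlt => /orP [/eqP e|//].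
    by move/ord_inj/perm_inj: e => e; move: eb ea; rewrite e; lia.
  by move=> m _; rewrite /f.
have := hf k0 (ltn_ord k0); rewrite /f.
by have -> : insubd k0 k0 = k0 by apply: ord_inj; rewrite val_insubd ltn_ord.
Qed.

End Comb.


Section Comb2.
Variable n : nat.
Local Open Scope group_scope.

Lemma tcase (a b p : 'I_n) :
  (p = a /\ tperm a b p = b) \/ (p = b /\ tperm a b p = a) \/
  (nat_of_ord p <> a /\ nat_of_ord p <> b /\ tperm a b p = p).
Proof.
case: (eqVneq p a) => [->|hpa]; first by left; rewrite tpermL.
case: (eqVneq p b) => [->|hpb]; first by right; left; rewrite tpermR.
right; right; split; first by move/ord_inj => e; rewrite e eqxx in hpa.
split; first by move/ord_inj => e; rewrite e eqxx in hpb.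
by rewrite tpermD // eq_sym.
Qed.

Lemma inv_swap_le (g : {perm 'I_n}) (a b : 'I_n) : (a < b)%N -> (g b < g a)%N ->
  (#|Inv (tperm a b * g)| <= #|Inv g|)%N.
Proof.
move=> hab hg; set t := tperm a b.
pose phi := fun pq : 'I_n * 'I_n =>
  if (t pq.1 < t pq.2)%N then (t pq.1, t pq.2) else pq.
rewrite -(card_in_imset (f := phi)).
  apply: subset_leq_card; apply/subsetP => _ /imsetP [[p q] hA ->].
  move: hA; rewrite /phi !inE /= !permM => /andP [hpq h].
  case: ifP => hc; first by rewrite /= hc h.
  rewrite /= hpq /=; move: hpq hc h; rewrite /t.
  case: (tcase a b p) => [[-> ->]|[[-> ->]|[hpa [hpb ->]]]];
  case: (tcase a b q) => [[-> ->]|[[-> ->]|[hqa [hqb ->]]]]; move=> hpq hc h; lia.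
move=> [p q] [p' q']; rewrite !inE /= !permM /phi /= => /andP [hpq _] /andP [hpq' _].
case: ifP => h1; case: ifP => h2 //.
- by case=> /perm_inj -> /perm_inj ->.
- case=> e1 e2; move: h2; rewrite -e1 -e2 /t !tpermK hpq //.
- case=> e1 e2; move: h1; rewrite e1 e2 /t !tpermK hpq' //.
Qed.

Lemma bruhat_decode (sg tau : {perm 'I_n}) :
  bruhat_step [set: {perm 'I_n}] (sym_gens n) sg tau ->
  exists a b : 'I_n, [/\ (a < b)%N, (sg^-1 a < sg^-1 b)%N & tau = sg * tperm a b].
Proof.
case=> t ht [-> [k [hk1 hk2]]].
have [a [b [hab et]]] : exists a b : 'I_n, (a < b)%N /\ t = tperm a b.
  move: ht; rewrite /reflections => /imset2P [s w hs _ ->].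
  have [i [j [hj ->]]] := sym_gensP hs.
  rewrite tpermJ.
  have hne : (w i != w j) by apply/eqP => /perm_inj e; move: hj; rewrite e; lia.
  case: (ltngtP (w i) (w j)) => h.
  - by exists (w i), (w j).
  - by exists (w j), (w i); rewrite tpermC.
  - by move/ord_inj: h => e; rewrite e eqxx in hne.
exists a, b; split => //; last by rewrite et.
case: (ltngtP (sg^-1 a) (sg^-1 b)) => // h; last first.
  by move/ord_inj/perm_inj: h => e; move: hab; rewrite e ltnn.
exfalso.
have h1 := inv_swap_le hab h.
case: hk1 => [[s [hs hws hsz]] _].
have h2 := inv_word_le hs; rewrite hws hsz in h2.
case: hk2 => [_ hmin].
have [r [hr hwr hszr]] := inv_word_ex (sg * t).
have h3 := hmin r hr hwr.
have e : (sg * t)^-1 = tperm a b * sg^-1 by rewrite invMg et tpermV.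
rewrite e in hszr.
by have := leq_trans (leq_trans (leq_trans h3 hszr) h1) h2; rewrite ltnn.
Qed.

End Comb2.


Lemma prefix_len (gT : finGroupType) (S : {set gT}) (s : seq gT) (w : gT) k :
  reduced_expr S s w -> (k <= size s)%N -> cox_len S (wprod (take k s)) k.
Proof.
case=> hs hw [_ hmin] hk.
have [ht hd] : word_over S (take k s) /\ word_over S (drop k s).
  by move: hs; rewrite /word_over -{1}(cat_take_drop k s) all_cat => /andP.
split; first by exists (take k s); split => //; rewrite size_takel.
move=> r hr hwr.
have := hmin (r ++ drop k s).
rewrite /word_over in hr hd; rewrite /word_over all_cat hr hd /wprod big_cat /= -/(wprod r) -/(wprod (drop k s)) hwr.
rewrite /wprod -big_cat /= cat_take_drop -/(wprod s) hw size_cat size_drop.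
move=> /(_ isT erefl); lia.
Qed.

Lemma prec_of_bruhat n alpha (hn : (2 <= n)%N) (ha1 : Rle (Rdiv PI 4) alpha) (ha2 : Rlt alpha (Rdiv PI 2))
  (x y : {perm 'I_n}) : sym_bruhat_lt x y -> border_prec n alpha x y.
Proof.
elim=> [u v hs | u v z _ IH1 _ IH2].
  have [a [b [hab hg ->]]] := bruhat_decode hs.
  exact: step_prec.
exact: prec_trans IH1 IH2.
Qed.

Unset Implicit Arguments.
Theorem theorem1p1 (gT : finGroupType) (W : {group gT}) (S : {set gT}) (n : nat)
    (phi : {morphism W >-> {perm 'I_n}}) (alpha : R) :
  coxeter_system W S -> (2 <= n)%N -> E_embedding S phi ->
  Rle (PI / 4) alpha -> Rlt alpha (PI / 2) ->
  forall (w : gT) (s : seq gT), w \in W -> reduced_expr S s w ->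
  forall i : nat, (i < size s)%N ->
    border_prec n alpha (phi (wprod (take i s))) (phi (wprod (take i.+1 s))).
Proof.
move=> [hSW _ _ _] hn [_ hE] ha1 ha2 w s hw hred i hi.
apply: (prec_of_bruhat hn ha1 ha2).
have hs : word_over S s by case: hred.
have inW : forall k, wprod (take k s) \in W.
  move=> k; rewrite /wprod big_seq; apply: group_prod => x hx.
  apply: (subsetP hSW); apply: (allP hs); exact: mem_take hx.
apply: hE; rewrite ?inW //.
apply: t_step.
exists (nth 1%g s i).
  by apply: (allP hs); apply: mem_nth.
split; first by rewrite (take_nth 1%g hi) /wprod -cats1 big_cat /= big_seq1.
exists i; split; first exact: prefix_len hred (ltnW hi).
exact: prefix_len hred hi.
Qed.
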